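(* Let $\mathcal{S}$ be a Borel space and $(\mathbf{y},\mathbf{X})$ a random element of $\{\pm1\}^n\times\mathcal{S}$. Let $\mathcal{F}$ be a family of Borel maps from $\mathcal{S}$ to $\{\pm1\}^n$. Define $\mathcal{M}(\mathbf{u},\mathbf{v})=\min\{\frac1n\sum_i\mathbf{1}\{u_i\ne v_i\},\frac1n\sum_i\mathbf{1}\{-u_i\ne v_i\}\}$ for $\mathbf{u},\mathbf{v}\in\{\pm1\}^n$, and $f(\cdot\mid\tilde{\mathbf{X}},\tilde{\mathbf{y}}_{-i})=\mathbb{P}(y_i=\cdot\mid\mathbf{X}=\tilde{\mathbf{X}},\mathbf{y}_{-i}=\tilde{\mathbf{y}}_{-i})$ for $i\in[n]$. Then $\inf_{\hat{\mathbf{y}}\in\mathcal{F}}\mathbb{E}\mathcal{M}(\hat{\mathbf{y}}(\mathbf{X}),\mathbf{y})\ge\frac{n-1}{3n-1}\cdot\frac1n\sum_{i=1}^n\mathbb{P}\big[f(y_i\mid\mathbf{X},\mathbf{y}_{-i})<f(-y_i\mid\mathbf{X},\mathbf{y}_{-i})\big]$.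
   Context: $\mathbf{y}_{-i}\in\{\pm1\}^{n-1}$ denotes $\mathbf{y}$ with its $i$-th entry removed; $f$ is a (regular) conditional probability mass function of $y_i$ given $(\mathbf{X},\mathbf{y}_{-i})$. *)

(* Defs.v *)
From HB Require Import structures.
From mathcomp Require Import all_boot all_order all_algebra.
From mathcomp Require Import all_classical all_reals all_analysis.
Set Implicit Arguments. Unset Strict Implicit. Unset Printing Implicit Defensive.
Import Order.TTheory GRing.Theory Num.Theory.
Local Open Scope classical_set_scope.
Local Open Scope ring_scope.

(* A sign vector in {+1,-1}^n: [true] encodes +1, [false] encodes -1;
   negation of a sign is [~~]. *)
Definition signvec (n : nat) := {ffun 'I_n -> bool}.

Definition drop_coord (n : nat) (i : 'I_n) (y : signvec n) : signvec n.-1 :=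
  [ffun j => y (lift i j)].

(* Measurability of a map into the finite set {+-1}^n (discrete sigma-algebra):
   every fibre is measurable. *)
Definition sign_measurable d (T : measurableType d) (n : nat) (g : T -> signvec n) :=
  forall v : signvec n, measurable (g @^-1` [set v]).

Definition Mloss (R : realType) (n : nat) (u v : signvec n) : R :=
  Num.min (n%:R^-1 * \sum_(i < n) ((u i != v i)%:R : R))
          (n%:R^-1 * \sum_(i < n) (((~~ u i) != v i)%:R : R)).

(* g is a (regular) conditional probability mass function of y_i given
   (X, y_{-i}), where (Y, X) is a random element on (Omega, P):
   g s x z = P(y_i = s | X = x, y_{-i} = z). *)
Definition is_cond_pmf (R : realType) d0 (Omega : measurableType d0)
  (P : probability Omega R) d (S : measurableType d) (n : nat)
  (Y : Omega -> signvec n) (X : Omega -> S) (i : 'I_n)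
  (g : bool -> S -> signvec n.-1 -> R) : Prop :=
  [/\ (forall s z, measurable_fun setT (fun x => g s x z)),
      (forall s x z, 0 <= g s x z),
      (forall x z, g true x z + g false x z = 1) &
      (forall s z (B : set S), measurable B ->
         P [set w | Y w i = s /\ B (X w) /\ drop_coord i (Y w) = z] =
         (\int[P]_(w in [set w | B (X w) /\ drop_coord i (Y w) = z])
            (g s (X w) z)%:E)%E)].

(* Main.v *)
Require Import Defs.
From HB Require Import structures.
From mathcomp Require Import all_boot all_order all_algebra.
From mathcomp Require Import all_classical all_reals all_analysis.
From mathcomp Require Import measurable_realfun.
From mathcomp Require Import zify ring lra.
Import Order.TTheory GRing.Theory Num.Theory.
Local Open Scope classical_set_scope.
Local Open Scope ring_scope.

Section Helpers.
Context d (T : measurableType d) (V : finType).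

Lemma fin_preimage_meas (G : T -> V) :
  (forall v, measurable (G @^-1` [set v])) ->
  forall A : set V, measurable (G @^-1` A).
Proof.
move=> HG A.
have -> : G @^-1` A = \bigcup_(v in A) G @^-1` [set v].
  apply/seteqP; split => w /=.
  - by move=> Aw; exists (G w).
  - by move=> [v Av /= ->].
apply: fin_bigcup_measurable => //; exact: finite_finset.
Qed.

Lemma fin_comp_meas d' (U : measurableType d') (G : T -> V) (h : V -> U) :
  (forall v, measurable (G @^-1` [set v])) ->
  measurable_fun setT (fun w => h (G w)).
Proof.
move=> HG _ B _; rewrite setTI.
by have := fin_preimage_meas G HG (h @^-1` B).
Qed.
End Helpers.

Lemma mem_setAnd (T : Type) (b : T -> bool) (Q : T -> Prop) w :
  Q w -> (w \in [set w | b w /\ Q w]) = b w.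
Proof.
move=> q; apply/idP/idP => [/set_mem[]//|bw]; exact/mem_set.
Qed.

Lemma mem_setAndN (T : Type) (b : T -> bool) (Q : T -> Prop) w :
  ~ Q w -> (w \in [set w | b w /\ Q w]) = false.
Proof.
by move=> q; apply/negbTE/negP => /set_mem[_ ].
Qed.
Definition Gi (n : nat) (i : 'I_n) (u : signvec n) (z : signvec n.-1) : bool :=
  if (2 * \sum_(j < n.-1) ((u (lift i j) != z j) : nat) <= n.-1)%N
  then u i else ~~ u i.

Arguments Gi {n}.

Lemma err_sum n (u v : signvec n) :
  (\sum_(i < n) ((Gi i u (drop_coord i v) != v i) : nat) =
    (2 * ((\sum_(i < n) ((u i != v i) : nat)) - 1) <= n.-1) * (\sum_(i < n) ((u i != v i) : nat)) +
    (~~ (2 * (\sum_(i < n) ((u i != v i) : nat)) <= n.-1)) * (\sum_(i < n) ((~~ (u i != v i)) : nat)))%N.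
Proof.
set A := (\sum_(i < n) ((u i != v i) : nat))%N.
rewrite (eq_bigr (fun i => if u i != v i then ((2 * (A - 1) <= n.-1)%N : nat)
                           else ((~~ (2 * A <= n.-1)%N) : nat))); last first.
  move=> i _.
  have hA : A = ((u i != v i) + \sum_(j < n.-1) ((u (lift i j) != drop_coord i v j) : nat))%N.
    rewrite /A (bigD1_ord i) //=; congr (_ + _)%N.
    by apply: eq_bigr => j _; rewrite ffunE.
  rewrite /Gi; move: hA.
  set m := (\sum_(j < n.-1) _)%N => hA.
  have -> : m = (A - (u i != v i))%N by clearbody m A; lia.
  by case: (u i) (v i) => [] [] /=; rewrite ?subn0; case: ifP.
rewrite (eq_bigr (fun i => ((u i != v i) * (2 * (A - 1) <= n.-1)%N +
                            (~~ (u i != v i)) * (~~ (2 * A <= n.-1)%N))%N)); last first.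
  by move=> i _; case: (u i != v i); rewrite /= ?mul1n ?mul0n ?addn0.
rewrite big_split /= -!big_distrl /= -/A.
by rewrite [X in (X + _)%N]mulnC [X in (_ + X)%N]mulnC.
Qed.

Lemma num_ineq (n A B : nat) (k1 k2 : bool) :
  (A + B = n)%N ->
  k1 = (2 * (A - 1) <= n.-1)%N ->
  k2 = ~~ (2 * A <= n.-1)%N ->
  ((n - 1) * (k1 * A + k2 * B) <= (3 * n - 1) * A)%N /\
  ((n - 1) * (k1 * A + k2 * B) <= (3 * n - 1) * B)%N.
Proof.
move=> hn -> ->.
case: (leqP (2 * (A - 1)) n.-1) => h1; case: (leqP (2 * A) n.-1) => h2 /=;
  rewrite ?mul1n ?mul0n ?add0n ?addn0.
- split; nia.
- have [eA|eA] : A = B \/ A = B.+1 by lia.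
  + subst A; split; nia.
  + subst A; split; nia.
- lia.
- split; nia.
Qed.

Lemma pointwise (R : realType) n (u v : signvec n) :
  ((n%:R - 1) / (3 * n%:R - 1)) *
    (n%:R^-1 * \sum_(i < n) (((Gi i u (drop_coord i v)) != v i)%:R : R))
  <= @Mloss R n u v.
Proof.
rewrite -natr_sum err_sum /Mloss -!natr_sum.
set A := (\sum_(i < n) ((u i != v i) : nat))%N.
set B := (\sum_(i < n) ((~~ (u i != v i)) : nat))%N.
have -> : (\sum_(i < n) (((~~ u i) != v i) : nat))%N = B.
  by apply: eq_bigr => i _; case: (u i); case: (v i).
have hAB : (A + B = n)%N.
  rewrite /A /B -big_split /=.
  rewrite (eq_bigr (fun _ => 1%N)); last by move=> i _; case: (u i != v i).
  by rewrite sum1_card card_ord.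
have [h1 h2] := num_ineq _ _ _ _ _ hAB erefl erefl.
move: h1 h2.
set X := (_ * A + _ * B)%N.
move=> h1 h2.
have [n0|n_gt0] := posnP n.
  have hA0 : A = 0%N by lia.
  have hB0 : B = 0%N by lia.
  have -> : X = 0%N by rewrite /X hA0 hB0 !muln0.
  by rewrite hA0 hB0 !mulr0 minxx.
have hn : (0 : R) < n%:R by rewrite ltr0n.
have h3 : (0 : R) < 3 * n%:R - 1.
  rewrite subr_gt0 -natrM ltr1n; lia.
have hc1 : ((n - 1)%N%:R : R) = n%:R - 1 by rewrite natrB.
have hc2 : ((3 * n - 1)%N%:R : R) = 3 * n%:R - 1 by rewrite natrB ?natrM //; lia.
rewrite le_min; apply/andP; split.
- rewrite mulrCA ler_pM2l ?invr_gt0 // mulrAC ler_pdivrMr //.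
  rewrite -hc1 -hc2 -!natrM ler_nat; clearbody X A B; nia.
- rewrite mulrCA ler_pM2l ?invr_gt0 // mulrAC ler_pdivrMr //.
  rewrite -hc1 -hc2 -!natrM ler_nat; clearbody X A B; nia.
Qed.

Local Open Scope ereal_scope.

Lemma decompP (R : realType) d0 (Omega : measurableType d0) (P : probability Omega R)
  d (S : measurableType d) n (Y : Omega -> signvec n) (X : Omega -> S)
  (HY : sign_measurable Y) (HX : measurable_fun setT X) (i : 'I_n)
  (g : bool -> S -> signvec n.-1 -> R) (Hg : is_cond_pmf P Y X i g)
  (B : bool -> signvec n.-1 -> S -> bool)
  (mB : forall s z, measurable [set x | B s z x]) :
  P [set w | B (Y w i) (drop_coord i (Y w)) (X w)] =
  \sum_(z : signvec n.-1) \sum_(s : bool)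
     \int[P]_(w in [set w | B s z (X w) /\ drop_coord i (Y w) = z]) (g s (X w) z)%:E.
Proof.
have [_ _ _ Hint] := Hg.
have mX : forall A, measurable A -> measurable (X @^-1` A).
  by move=> A mA; have := HX measurableT A mA; rewrite setTI.
have mY : forall A : set (signvec n), measurable (Y @^-1` A) := @fin_preimage_meas _ _ _ Y HY.
pose F := fun p : bool * signvec n.-1 =>
  [set w | Y w i = p.1 /\ [set x | B p.1 p.2 x] (X w) /\ drop_coord i (Y w) = p.2].
have mF : forall p, measurable (F p).
  move=> p.
  have -> : F p = X @^-1` [set x | B p.1 p.2 x] `&`
                  Y @^-1` [set v : signvec n | v i = p.1 /\ drop_coord i v = p.2].
    by apply/seteqP; split => w /=; rewrite /F /=; tauto.
  by apply: measurableI; [exact: mX | exact: mY].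
have -> : [set w | B (Y w i) (drop_coord i (Y w)) (X w)] = \bigcup_(p in setT) F p.
  apply/seteqP; split => w /=.
  - by move=> h; exists (Y w i, drop_coord i (Y w)).
  - by case => -[s z] _ /= [e1 [h e2]]; rewrite e1 e2.
rewrite measure_fin_bigcup //; last 2 first.
- exact: finite_finset.
- move=> [s z] [s' z'] _ _ [w [[/= e1 [_ e2]] [/= e1' [_ e2']]]].
  by rewrite -e1 -e1' -e2 -e2'.
rewrite (fsbigE (index_enum _)) //; last first.
  by move=> p _; rewrite mem_index_enum.
  exact: index_enum_uniq.
under eq_bigl do rewrite in_setT.
rewrite (eq_bigr (fun p => P (F (p.1, p.2)))); last by case.
rewrite -(pair_big xpredT xpredT (fun s z => P (F (s, z)))) /= exchange_big /=.
apply: eq_bigr => z _; apply: eq_bigr => s _.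
exact: Hint.
Qed.

Lemma bayes (R : realType) d0 (Omega : measurableType d0) (P : probability Omega R)
  d (S : measurableType d) n (Y : Omega -> signvec n) (X : Omega -> S)
  (HY : sign_measurable Y) (HX : measurable_fun setT X) (i : 'I_n)
  (g : bool -> S -> signvec n.-1 -> R) (Hg : is_cond_pmf P Y X i g)
  (G : S -> signvec n.-1 -> bool)
  (mG : forall s z, measurable [set x | G x z == s]) :
  P [set w | (g (Y w i) (X w) (drop_coord i (Y w))
                < g (~~ Y w i) (X w) (drop_coord i (Y w)))%R]
  <= P [set w | G (X w) (drop_coord i (Y w)) != Y w i].
Proof.
have [mg g0 g1 _] := Hg.
have mX : forall A, measurable A -> measurable (X @^-1` A).
  by move=> A mA; have := HX measurableT A mA; rewrite setTI.
have mY : forall A : set (signvec n), measurable (Y @^-1` A) := @fin_preimage_meas _ _ _ Y HY.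
rewrite (@decompP R d0 Omega P d S n Y X HY HX i g Hg
          (fun s z x => (g s x z < g (~~ s) x z)%R)); last first.
  move=> s z.
  have := measurable_fun_ltr (mg s z) (mg (~~ s) z) measurableT (Y := [set true]).
  by rewrite setTI; apply.
have -> : [set w | G (X w) (drop_coord i (Y w)) != Y w i] =
          [set w | (fun s z x => G x z == ~~ s) (Y w i) (drop_coord i (Y w)) (X w)].
  by apply/seteqP; split => w /=; case: (G _ _); case: (Y w i).
rewrite (@decompP R d0 Omega P d S n Y X HY HX i g Hg
          (fun s z x => G x z == ~~ s)) //.
apply: lee_sum => z _; rewrite !big_bool /=.
have key : forall (Bb : S -> bool) s, measurable [set x | Bb x] ->
   measurable_fun setT ((fun w => (g s (X w) z)%:E) \_
       [set w | Bb (X w) /\ drop_coord i (Y w) = z]) /\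
   (forall w, setT w -> 0 <= ((fun w => (g s (X w) z)%:E) \_
       [set w | Bb (X w) /\ drop_coord i (Y w) = z]) w).
  move=> Bb s mBb; split.
  - apply/(measurable_restrictT _ _).1.
      have -> : [set w | Bb (X w) /\ drop_coord i (Y w) = z] =
                X @^-1` [set x | Bb x] `&` Y @^-1` [set v : signvec n | drop_coord i v = z].
        by apply/seteqP; split => w /=.
      by apply: measurableI; [exact: mX | exact: mY].
    apply: measurable_funTS.
    apply/measurable_EFinP; exact: measurableT_comp (mg s z) HX.
  - move=> w _; rewrite /patch; case: ifP => _ //; rewrite lee_fin; exact: g0.
have mL : forall s, measurable [set x | (g s x z < g (~~ s) x z)%R].
  move=> s; have := measurable_fun_ltr (mg s z) (mg (~~ s) z) measurableT (Y := [set true]).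
  by rewrite setTI; apply.
have [m1 p1] := key _ true (mL true).
have [m2 p2] := key _ false (mL false).
have [m3 p3] := key _ true (mG (~~ true) z).
have [m4 p4] := key _ false (mG (~~ false) z).
rewrite [X in (X + _ <= _)%E]integral_mkcond [X in (_ + X <= _)%E]integral_mkcond.
rewrite [X in (_ <= X + _)%E]integral_mkcond [X in (_ <= _ + X)%E]integral_mkcond.
rewrite -(@ge0_integralD _ _ _ P setT measurableT _ _ p1 m1 p2 m2).
rewrite -(@ge0_integralD _ _ _ P setT measurableT _ _ p3 m3 p4 m4).
apply: ge0_le_integral => //.
- by move=> w _; apply: adde_ge0; [exact: p1 | exact: p2].
- exact: emeasurable_funD.
- exact: emeasurable_funD.
move=> w _; rewrite /patch.
have ga := g0 true (X w) z; have gb := g0 false (X w) z.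
case: (pselect (drop_coord i (Y w) = z)) => hz.
- rewrite !mem_setAnd //=.
  have e0 : (point : \bar R) = 0 by [].
  rewrite !e0.
  case: (G (X w) z) => /=.
  + case: ifP => h1; case: ifP => h2; rewrite ?adde0 ?add0e ?lee_fin //; lra.
  + case: ifP => h1; case: ifP => h2; rewrite ?adde0 ?add0e ?lee_fin //; lra.
- by rewrite !mem_setAndN // adde0.
Qed.

Local Close Scope ereal_scope.

Theorem lemmaF3 (R : realType) (d0 : measure_display) (Omega : measurableType d0)
  (P : probability Omega R) (d : measure_display) (S : measurableType d) (n : nat)
  (Y : Omega -> signvec n) (X : Omega -> S)
  (HY : sign_measurable Y) (HX : measurable_fun setT X)
  (F : set (S -> signvec n)) (HF : forall yh, F yh -> sign_measurable yh)
  (f : 'I_n -> bool -> S -> signvec n.-1 -> R)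
  (Hf : forall i, is_cond_pmf P Y X i (f i)) :
  (ereal_inf [set (\int[P]_w (@Mloss R n (yh (X w)) (Y w))%:E)%E | yh in F]
   >= ((n%:R - 1) / (3 * n%:R - 1))%:E *
      ((n%:R^-1)%:E *
       \sum_(i < n) P [set w | (f i (Y w i) (X w) (drop_coord i (Y w))
                               < f i (~~ Y w i) (X w) (drop_coord i (Y w)))%R]))%E.
Proof.
apply: le_ereal_inf_tmp => _ [yh Fyh <-].
set c := ((n%:R - 1) / (3 * n%:R - 1)) : R.
have c0 : 0 <= c.
  have [n0|n_gt0] := posnP n.
    by rewrite /c n0 mulr0 sub0r divff ?oppr_eq0 ?oner_eq0.
  apply: divr_ge0; first by rewrite subr_ge0 ler1n.
  rewrite subr_ge0 -natrM ler1n; lia.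
have mX : forall A, measurable A -> measurable (X @^-1` A).
  by move=> A mA; have := HX measurableT A mA; rewrite setTI.
have Hyh := HF yh Fyh.
have hP : forall p : signvec n * signvec n,
    measurable ((fun w => (yh (X w), Y w)) @^-1` [set p]).
  move=> [u v].
  have -> : (fun w => (yh (X w), Y w)) @^-1` [set (u, v)] =
            X @^-1` (yh @^-1` [set u]) `&` Y @^-1` [set v].
    by apply/seteqP; split => w /=; [case => -> -> | case => -> ->].
  by apply: measurableI; [apply: mX; exact: Hyh | exact: HY].
pose D := fun i : 'I_n => [set w | Gi i (yh (X w)) (drop_coord i (Y w)) != Y w i].
have mD : forall i, measurable (D i).
  move=> i.
  by have := @fin_preimage_meas _ _ _ _ hP
     [set p : signvec n * signvec n | Gi i p.1 (drop_coord i p.2) != p.2 i].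
apply: (@le_trans _ _ (c%:E * ((n%:R^-1)%:E * \sum_(i < n) P (D i)))%E).
  apply: lee_wpmul2l; first by rewrite lee_fin.
  apply: lee_wpmul2l; first by rewrite lee_fin invr_ge0 ler0n.
  apply: lee_sum => i _.
  have mG : forall s z, measurable [set x | Gi i (yh x) z == s].
    move=> s z.
    by have := @fin_preimage_meas _ _ _ _ Hyh [set u : signvec n | Gi i u z == s].
  exact: (@bayes R d0 Omega P d S n Y X HY HX i (f i) (Hf i)
            (fun x z => Gi i (yh x) z) mG).
have mI : forall i, measurable_fun setT (fun w => (\1_(D i) w)%:E : \bar R).
  by move=> i; apply/measurable_EFinP; exact: measurable_indic.
have I0 : forall i w, setT w -> (0 <= (\1_(D i) w)%:E :> \bar R)%E.
  by move=> i w _; rewrite lee_fin indicE ler0n.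
rewrite (eq_bigr (fun i => (\int[P]_w (\1_(D i) w)%:E)%E)); last first.
  by move=> i _; rewrite (@integral_indic _ _ _ P setT measurableT _ (mD i)) setIT.
rewrite -(@ge0_integral_sum _ _ _ P setT measurableT _ (fun i w => (\1_(D i) w)%:E) mI I0).
rewrite muleA -EFinM.
have mS : measurable_fun setT (fun w => (\sum_(i < n) (\1_(D i) w)%:E)%R : \bar R).
  exact: emeasurable_sum.
have S0 : forall w, setT w -> (0 <= (\sum_(i < n) (\1_(D i) w)%:E)%R :> \bar R)%E.
  by move=> w _; apply: sume_ge0 => i _; exact: I0.
have k0 : (0 <= (c * n%:R^-1)%:E :> \bar R)%E.
  by rewrite lee_fin mulr_ge0 // invr_ge0 ler0n.
rewrite -(@ge0_integralZl _ _ _ P setT measurableT _ mS _ S0 k0).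
apply: ge0_le_integral => //.
- by move=> w _; apply: mule_ge0 => //; exact: S0.
- exact: emeasurable_funM.
- exact: (@fin_comp_meas _ _ _ _ _ (fun w => (yh (X w), Y w))
            (fun p => (@Mloss R n p.1 p.2)%:E) hP).
move=> w _; rewrite sumEFin -EFinM lee_fin -mulrA.
rewrite (eq_bigr (fun i => ((Gi i (yh (X w)) (drop_coord i (Y w)) != Y w i)%:R : R))).
  exact: pointwise.
move=> i _; rewrite indicE; congr (_%:R).
congr (nat_of_bool _); apply/idP/idP => [/set_mem // | h]; exact/mem_set.
Qed.
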